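(* Let $G=(V,E,w)$, $s$, $\tau$ (with $|\tau|\ge 2$) and a budget $b\ge 0$ be as in the context, and suppose that at least one feasible subgraph exists. Then among the maximizers of $\textsc{CD}_{\tau,s}(S)$ over all feasible subgraphs $S\subseteq G$, there is one that is a directed acyclic graph in which $s$ is the unique source (a source being a vertex $u$ with no edge $v\to u$ in the subgraph).
   Context: Let $G=(V,E,w)$ be a finite directed graph with non-negative edge weights $w:E\to\mathbb{R}_{\ge 0}$. A path from $u$ to $v$ in a subgraph $S\subseteq G$ is a sequence $u=v_0\to v_1\to\cdots\to v_k=v$ ($k\ge 0$) with each $v_i\to v_{i+1}$ an edge of $S$; for $i\le j$, $w_P(v_i,v_j)=\sum_{m=i}^{j-1} w(v_m\to v_{m+1})$. A vertex $y$ is reachable from $x$ in $S$ if there is a path from $x$ to $y$ in $S$ (a vertex is reachable from itself). Fix a start vertex $s\in V$ and a finite target set $\tau\subseteq V\setminus\{s\}$ with $|\tau|\ge 2$. The cost of a subgraph $S$ is $w(S)=\sum_{e\in E(S)} w(e)$. For a subgraph $S$ containing $s$ and $\tau$ in which every target is reachable from $s$: for a path $P=v_0\to\cdots\to v_k$ in $S$ with $v_0=s$, $v_k=t\in\tau$, let $\ell$ be the largest index such that some target in $\tau\setminus\{t\}$ is reachable from $v_\ell$ in $S$; the last deceptive point is $l(P,t)=v_\ell$. The unique distance of $t\in\tau$ is $\textsc{U}_S(t)=\min\{w_P(l(P,t),t): P \text{ a path in } S \text{ from } s \text{ to } t\}$, and the counterdeceptiveness of $S$ is $\textsc{CD}_{\tau,s}(S)=\min_{t\in\tau}\textsc{U}_S(t)$.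 Given a budget $b\ge 0$, a subgraph $S\subseteq G$ is feasible if $s\in V(S)$, $\tau\subseteq V(S)$, every target is reachable from $s$ in $S$, and $w(S)\le b$. A maximizer is a feasible $S$ maximizing $\textsc{CD}_{\tau,s}(S)$ among feasible subgraphs. *)

(* Defs.v *)
From mathcomp Require Import all_boot all_order all_algebra.
From mathcomp Require Import reals.
Set Implicit Arguments. Unset Strict Implicit. Unset Printing Implicit Defensive.
Import Order.TTheory GRing.Theory Num.Theory.
Local Open Scope ring_scope.

(* The graph G = (V, E, w): V a finite type of vertices, E : rel V the
   directed edge relation, w u v the weight of the edge u -> v
   (only meaningful when E u v).  A path v_0 -> ... -> v_k is represented by
   its start x = v_0 and the list p = [v_1; ...; v_k]. *)

Section Deceptive.
Variables (R : realType) (V : finType) (E : rel V) (w : V -> V -> R).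

Definition is_subgraph (VS : {set V}) (ES : {set V * V}) : Prop :=
  forall e, e \in ES -> [&& E e.1 e.2, e.1 \in VS & e.2 \in VS].

Definition cost (ES : {set V * V}) : R := \sum_(e in ES) w e.1 e.2.

Definition spath (ES : {set V * V}) (x : V) (p : seq V) : bool :=
  path (fun a b => (a, b) \in ES) x p.

Definition reachable (ES : {set V * V}) (x y : V) : Prop :=
  exists p, spath ES x p /\ last x p = y.

(* w_P(v_i, v_j) for the path P = x :: p  (v_m = nth x (x :: p) m) *)
Definition pweight (x : V) (p : seq V) (i j : nat) : R :=
  \sum_(i <= m < j) w (nth x (x :: p) m) (nth x (x :: p) m.+1).

(* l is the index of the last deceptive point of the path P = x :: p
   ending at target t: the largest index l <= k = size p such that some
   target of tau other than t is reachable from v_l in ES. *)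
Definition is_ldp (ES : {set V * V}) (tau : {set V}) (t : V)
    (x : V) (p : seq V) (l : nat) : Prop :=
  [/\ (l <= size p)%N,
      (exists2 t', t' \in tau :\ t & reachable ES (nth x (x :: p) l) t') &
      forall m, (l < m <= size p)%N ->
        ~ (exists2 t', t' \in tau :\ t & reachable ES (nth x (x :: p) m) t')].

(* u = U_S(t): the minimum of w_P(l(P,t), t) over paths P from s to t in S
   (the minimum exists and equals u). *)
Definition is_unique_dist (ES : {set V * V}) (s : V) (tau : {set V})
    (t : V) (u : R) : Prop :=
  (exists p l, [/\ spath ES s p, last s p = t, is_ldp ES tau t s p l &
                   u = pweight s p l (size p)]) /\
  (forall p l, spath ES s p -> last s p = t -> is_ldp ES tau t s p l ->
     u <= pweight s p l (size p)).

(* c = CD_{tau,s}(S) = min over t in tau of U_S(t) *)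
Definition is_CD (ES : {set V * V}) (s : V) (tau : {set V}) (c : R) : Prop :=
  (forall t, t \in tau -> exists u, is_unique_dist ES s tau t u) /\
  (exists2 t, t \in tau & is_unique_dist ES s tau t c) /\
  (forall t u, t \in tau -> is_unique_dist ES s tau t u -> c <= u).

Definition feasible (s : V) (tau : {set V}) (b : R)
    (VS : {set V}) (ES : {set V * V}) : Prop :=
  [/\ is_subgraph VS ES, s \in VS, tau \subset VS,
      (forall t, t \in tau -> reachable ES s t) & cost ES <= b].

Definition is_maximizer (s : V) (tau : {set V}) (b : R)
    (VS : {set V}) (ES : {set V * V}) : Prop :=
  feasible s tau b VS ES /\
  exists c, is_CD ES s tau c /\
    forall VS' ES' c', feasible s tau b VS' ES' -> is_CD ES' s tau c' ->
      c' <= c.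

Definition acyclic (ES : {set V * V}) : Prop :=
  forall x p, spath ES x p -> last x p = x -> p = [::].

Definition is_source (ES : {set V * V}) (u : V) : Prop :=
  forall v, (v, u) \notin ES.

Definition unique_source (VS : {set V}) (ES : {set V * V}) (s : V) : Prop :=
  s \in VS /\ is_source ES s /\
  forall u, u \in VS -> is_source ES u -> u = s.

End Deceptive.

(* Main.v *)
Require Import Defs.
From mathcomp Require Import all_boot all_order all_algebra.
From mathcomp Require Import reals.
From Stdlib Require Import Classical_Prop.
From mathcomp Require Import zify.
Set Implicit Arguments. Unset Strict Implicit. Unset Printing Implicit Defensive.
Import Order.TTheory GRing.Theory Num.Theory.
Local Open Scope ring_scope.

Lemma list_min (R : realType) (X : eqType) (L : seq X) (Q : X -> R -> Prop) :
  (forall x r1 r2, Q x r1 -> Q x r2 -> r1 = r2) ->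
  (exists x r, x \in L /\ Q x r) ->
  exists x r, [/\ x \in L, Q x r & forall y r', y \in L -> Q y r' -> r <= r'].
Proof.
move=> Qf; elim: L => [|a L IH] [x [r [xin Qx]]]; first by [].
have [[m [rm [mL Qm]]]|NL] := classic (exists x r, x \in L /\ Q x r).
  have [m' [rm' [m'L Qm' minm]]] := IH (ex_intro _ m (ex_intro _ rm (conj mL Qm))).
  have [[ra Qa]|Na] := classic (exists ra, Q a ra).
    have [le|lt] := leP ra rm'.
      exists a, ra; split; first by rewrite in_cons eqxx.
        by [].
      move=> y r' /[!inE] /orP[/eqP->|yL] Qy; first by rewrite (Qf _ _ _ Qy Qa).
      exact: le_trans le (minm _ _ yL Qy).
    exists m', rm'; split; first by rewrite in_cons m'L orbT.
      by [].
    move=> y r' /[!inE] /orP[/eqP->|yL] Qy; last by apply: (minm y r').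
    by rewrite (Qf _ _ _ Qy Qa) ltW.
  exists m', rm'; split; first by rewrite in_cons m'L orbT.
    by [].
  move=> y r' /[!inE] /orP[/eqP->|yL] Qy; last by apply: (minm y r').
  by case: Na; exists r'.
have xa : x = a.
  move: xin; rewrite inE => /orP[/eqP //|xL].
  by case: NL; exists x, r.
subst x; exists a, r; split; first by rewrite in_cons eqxx.
  by [].
move=> y r' /[!inE] /orP[/eqP->|yL] Qy; first by rewrite (Qf _ _ _ Qy Qx).
by case: NL; exists y, r'.
Qed.

Lemma last_max (n k : nat) (Q : nat -> Prop) : (k <= n)%N -> Q k ->
  exists l, [/\ (k <= l)%N, (l <= n)%N, Q l & forall m, (l < m <= n)%N -> ~ Q m].
Proof.
elim: n => [|n IH] kn Qk.
  exists k; split=> // m /andP[a b]; move: kn; lia.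
have [Qn|NQn] := classic (Q n.+1).
  exists n.+1; split=> // m /andP[a b]; lia.
have kn' : (k <= n)%N.
  move: kn; rewrite leq_eqVlt => /orP[/eqP ek|//]; by subst k.
have [l [kl ln Ql H]] := IH kn' Qk.
exists l; split=> //; first lia.
move=> m /andP[a b]; have [->//|mn] : m = n.+1 \/ (m <= n)%N by lia.
by apply: H; rewrite a mn.
Qed.

Fixpoint allseqs (T : Type) (e : seq T) (n : nat) : seq (seq T) :=
  if n is n'.+1 then [::] :: [seq x :: q | x <- e, q <- allseqs e n'] else [:: [::]].

Lemma allseqsP (T : finType) n (q : seq T) : (size q <= n)%N -> q \in allseqs (enum T) n.
Proof.
elim: n q => [|n IH] [|x q] //= hs; rewrite inE; apply/orP; right.
by apply: (allpairs_f (fun x q => x :: q)); [rewrite mem_enum | apply: IH].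
Qed.

Section G.
Variables (R : realType) (V : finType) (E : rel V) (w : V -> V -> R).
Variables (s : V) (tau : {set V}).

Lemma spath_sub (F1 F2 : {set V * V}) x p : F1 \subset F2 -> spath F1 x p -> spath F2 x p.
Proof. move=> /subsetP sub; apply: sub_path => a c; exact: sub. Qed.

Lemma reach_sub (F1 F2 : {set V * V}) x y : F1 \subset F2 -> reachable F1 x y -> reachable F2 x y.
Proof. by move=> sub [p [hp hl]]; exists p; split=> //; apply: spath_sub hp. Qed.

Lemma reach_ext (F : {set V * V}) x y z : reachable F x y -> (y, z) \in F -> reachable F x z.
Proof.
move=> [p [hp hl]] e; exists (rcons p z); split; last by rewrite last_rcons.
by move: hp; rewrite /spath rcons_path => ->; rewrite hl.
Qed.

Lemma reach_refl (F : {set V * V}) x : reachable F x x.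
Proof. by exists [::]. Qed.

Lemma closure (F : {set V * V}) (P : V -> Prop) x y : P x ->
  (forall a c, (a, c) \in F -> P a -> P c) -> reachable F x y -> P y.
Proof.
move=> Px cl [p [hp <-]]; elim: p x Px hp => [|z p IH] x Px //= /andP[e hp].
exact: IH (cl _ _ e Px) hp.
Qed.

Lemma reachE (F : {set V * V}) x y : reachable F x y <-> connect (fun a b => (a, b) \in F) x y.
Proof.
split=> [[p [hp hl]]|/connectP[p hp hl]]; first by apply/connectP; exists p.
by exists p.
Qed.

Definition nonneg (F : {set V * V}) := forall a c, (a, c) \in F -> 0 <= w a c.

Lemma pweight_split x p l l' k : (l' <= l <= k)%N ->
  pweight w x p l' k = pweight w x p l' l + pweight w x p l k.
Proof. by move=> /andP[a b]; rewrite /pweight (big_cat_nat a b). Qed.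

Lemma pweight_ge0 (F : {set V * V}) x p l k : nonneg F -> spath F x p -> (k <= size p)%N ->
  0 <= pweight w x p l k.
Proof.
move=> nn /(pathP x) hp kp; rewrite /pweight big_nat_cond; apply: sumr_ge0 => m.
move=> /andP[/andP[_ mk] _]; apply: nn; have := hp m (leq_trans mk kp); by [].
Qed.

Lemma pweight_anti (F : {set V * V}) x p l l' : nonneg F -> spath F x p ->
  (l' <= l <= size p)%N -> pweight w x p l (size p) <= pweight w x p l' (size p).
Proof.
move=> nn hp /andP[a b]; rewrite (@pweight_split x p l l'); last by rewrite a b.
rewrite lerDr; apply: pweight_ge0 nn hp _; exact: b.
Qed.

Definition Dp (F : {set V * V}) t y := exists2 t', t' \in tau :\ t & reachable F y t'.

Lemma ldp_exists (F : {set V * V}) t x p k : (k <= size p)%N -> Dp F t (nth x (x :: p) k) ->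
  exists l, (k <= l)%N /\ is_ldp F tau t x p l.
Proof.
move=> kp Dk; have [l [kl lp Dl H]] := last_max (Q := fun m => Dp F t (nth x (x :: p) m)) kp Dk.
by exists l; split.
Qed.

Lemma ud_fun (F : {set V * V}) t u1 u2 :
  is_unique_dist w F s tau t u1 -> is_unique_dist w F s tau t u2 -> u1 = u2.
Proof.
move=> [[p1 [l1 [h1 h2 h3 ->]]] m1] [[p2 [l2 [g1 g2 g3 ->]]] m2].
by apply: le_anti; rewrite m1 ?m2.
Qed.

Lemma cd_fun (F : {set V * V}) c1 c2 :
  is_CD w F s tau c1 -> is_CD w F s tau c2 -> c1 = c2.
Proof.
move=> [_ [[t1 t1t u1] m1]] [_ [[t2 t2t u2] m2]].
by apply: le_anti; rewrite (m1 _ _ t2t u2) (m2 _ _ t1t u1).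
Qed.

Lemma tau_other t : (2 <= #|tau|)%N -> exists t', t' \in tau :\ t.
Proof.
move=> h; apply/set0Pn; apply/negP => /eqP e.
have := cardsD1 t tau; rewrite e cards0 addn0; case: (t \in tau) => /=; lia.
Qed.

Lemma cd_mono (F F' : {set V * V}) c c' : (2 <= #|tau|)%N -> F' \subset F -> nonneg F ->
  is_CD w F s tau c -> is_CD w F' s tau c' -> c <= c'.
Proof.
move=> t2 sub nn [ex [_ mn]] [_ [[t tt [[p [l' [hp hl hldp ->]]] _]] _]].
have [u ud] := ex t tt.
have hpF := spath_sub sub hp.
case: hldp => l'p [t' t'in r'] _.
have [l [ll' ldpl]] := ldp_exists (t := t) (F := F) l'p (ex_intro2 _ _ t' t'in (reach_sub sub r')).
apply: le_trans (mn _ _ tt ud) _.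
apply: le_trans (ud.2 _ _ hpF hl ldpl) _.
apply: pweight_anti nn hpF _; rewrite ll'; by case: ldpl.
Qed.

Lemma acyclic_uniq (F : {set V * V}) x p : acyclic F -> spath F x p -> uniq (x :: p).
Proof.
move=> ac; elim: p x => [|y p IH] x //= /andP[e hp].
have := IH _ hp; rewrite /= => -> ; rewrite andbT.
apply/negP => xin.
have hp' : spath F x (y :: p) by rewrite /spath /= e; exact: hp.
move: hp'; case/splitPr: xin => p1 p2.
rewrite /spath -cat_rcons cat_path => /andP[hc _].
by have := ac _ _ hc (last_rcons _ _ _); case: p1 {hc}.
Qed.

Lemma cd_exists_dag (F : {set V * V}) : acyclic F -> (2 <= #|tau|)%N ->
  (forall t, t \in tau -> reachable F s t) -> exists c, is_CD w F s tau c.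
Proof.
move=> ac t2 reach.
have ud : forall t, t \in tau -> exists u, is_unique_dist w F s tau t u.
  move=> t tt.
  pose N := #|V|.
  pose L := [seq (p, l) | p <- allseqs (enum V) N, l <- iota 0 N.+1].
  have inL : forall p l, spath F s p -> (l <= size p)%N -> (p, l) \in L.
    move=> p l hp lp; have u := acyclic_uniq ac hp.
    have sz : (size (s :: p) <= N)%N by rewrite -(card_uniqP u) max_card.
    apply: (allpairs_f (fun p l => (p, l))).
      by apply: allseqsP; move: sz => /= ; lia.
    by rewrite mem_iota; move: sz => /=; lia.
  pose Q := fun (x : seq V * nat) r => [/\ spath F s x.1, last s x.1 = t,
      is_ldp F tau t s x.1 x.2 & r = pweight w s x.1 x.2 (size x.1)].
  have Qf : forall x r1 r2, Q x r1 -> Q x r2 -> r1 = r2.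
    by move=> x r1 r2 [_ _ _ ->] [_ _ _ ->].
  have [p [hp hl]] := reach t tt.
  have [t' t'in] := tau_other t t2.
  have t'tau : t' \in tau by move: t'in; rewrite in_setD1 => /andP[].
  have [l [_ ldp]] := ldp_exists (x := s) (p := p) (k := 0) (F := F) (t := t) (leq0n _)
     (ex_intro2 _ _ t' t'in (reach t' t'tau)).
  have ex : exists x r, x \in L /\ Q x r.
    exists (p, l), (pweight w s p l (size p)); split; last by [].
    by apply: inL => //; case: ldp.
  have [[p0 l0] [r [_ [h1 h2 h3 hr] mn]]] := list_min Qf ex.
  exists r; split; first by exists p0, l0.
  move=> p' l' h1' h2' h3'; apply: (mn (p', l')); last by [].
  by apply: inL => //; case: h3'.
have Qf : forall t u1 u2, is_unique_dist w F s tau t u1 -> is_unique_dist w F s tau t u2 -> u1 = u2.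
  by move=> t u1 u2; apply: ud_fun.
have [t0 t0in] : exists t, t \in tau.
  by apply/set0Pn; apply/negP => /eqP e; move: t2; rewrite e cards0.
have ex : exists x r, x \in enum tau /\ is_unique_dist w F s tau x r.
  by have [u hu] := ud t0 t0in; exists t0, u; rewrite mem_enum.
have [t [c [tin hc mn]]] := list_min Qf ex.
exists c; split; first exact: ud.
split; first by exists t; rewrite // -mem_enum.
by move=> t1 u1 t1in h; apply: mn h; rewrite mem_enum.
Qed.
End G.

Section Red.
Variables (R : realType) (V : finType) (E : rel V) (w : V -> V -> R).
Variables (s : V) (tau : {set V}) (b : R).

Lemma path_avoid (F : {set V * V}) a v x q : spath F x q -> v \notin q ->
  spath (F :\ (a, v)) x q.
Proof.
elim: q x => [|y q IH] x //= /andP[e hp]; rewrite inE negb_or => /andP[yv vq].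
apply/andP; split; last exact: IH.
rewrite in_setD1 e andbT; apply/negP => /eqP [_ yv']; by rewrite yv' eqxx in yv.
Qed.

Lemma reduce VS ES : (forall u v, E u v -> 0 <= w u v) -> feasible E w s tau b VS ES ->
  exists VS' ES', [/\ feasible E w s tau b VS' ES', ES' \subset ES, acyclic ES'
                    & unique_source VS' ES' s].
Proof.
move=> hw [sg sVS tVS reach hcost].
have nn : nonneg w ES.
  by move=> a c e; apply: hw; have /and3P[] := sg _ e.
pose Q := fun (F : {set V * V}) (r : R) => [/\ F \subset ES,
   forall t, t \in tau -> reachable F s t & r = (#|F|)%:R].
have Qf : forall x r1 r2, Q x r1 -> Q x r2 -> r1 = r2 by move=> x r1 r2 [_ _ ->] [_ _ ->].
have ex : exists x r, x \in enum [set: {set V * V}] /\ Q x r.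
  by exists ES, (#|ES|)%:R; rewrite mem_enum inE; split=> //; split.
have [F [r [_ [Fsub Freach ->] mn]]] := list_min Qf ex.
have minF : forall F' : {set V * V}, F' \subset ES -> (forall t, t \in tau -> reachable F' s t) ->
    (#|F| <= #|F'|)%N.
  move=> F' h1 h2; rewrite -(ler_nat R); apply: (mn F'); first by rewrite mem_enum inE.
  by split.
have remove : forall u v, (u, v) \in F ->
    (reachable (F :\ (u, v)) s u -> reachable (F :\ (u, v)) s v) -> False.
  move=> u v e imp.
  have h : forall t, t \in tau -> reachable (F :\ (u, v)) s t.
    move=> t tt; apply: (closure (P := reachable (F :\ (u, v)) s) (reach_refl _ _) _ (Freach t tt)).
    move=> a c ac Pa; case: (eqVneq (a, c) (u, v)) => [[ea ec]|ne]; first by subst; exact: imp.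
    by apply: reach_ext Pa _; rewrite in_setD1 ne ac.
  have := minF _ (subset_trans (subD1set F (u, v)) Fsub) h.
  by rewrite (cardsD1 (u, v) F) e /= add1n ltnn.
have src : forall v, (v, s) \notin F.
  move=> v; apply/negP => e; apply: (remove _ _ e) => _; exact: reach_refl.
have tails : forall u v, (u, v) \in F -> reachable F s u.
  move=> u v e; apply: NNPP => nr; apply: (remove _ _ e) => h; case: nr.
  exact: reach_sub (subD1set _ _) h.
have indeg : forall a c v, (a, v) \in F -> (c, v) \in F -> a = c.
  move=> a c v ea ec.
  have [p [hp hl]] := reach_ext (tails _ _ ea) ea.
  case: (shortenP hp) hl => p' hp' up' _ hl'.
  have vs : v != s by apply/eqP => vs; move: ea; rewrite vs; apply/negP; exact: src.
  case/lastP: p' hp' up' hl' => [|q z] hp' up' hl'.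
    by move: vs; rewrite -hl' eqxx.
  rewrite last_rcons in hl'; subst z.
  move: hp'; rewrite /spath rcons_path => /andP[hq ez].
  have vq : v \notin q.
    by move: up'; rewrite -rcons_cons rcons_uniq inE negb_or => /andP[/andP[_ ->]].
  have avoid : forall a', (a', v) \in F -> a' != last s q -> False.
    move=> a' ea' ne; apply: (remove _ _ ea') => _.
    exists (rcons q v); split; last by rewrite last_rcons.
    rewrite /spath rcons_path; apply/andP; split; first exact: path_avoid.
    rewrite in_setD1 ez andbT; apply/negP => /eqP [eq].
    by move: ne; rewrite eq eqxx.
  have /eqP -> : a == last s q by apply/negPn/negP => /(avoid _ ea).
  have /eqP -> : c == last s q by apply/negPn/negP => /(avoid _ ec).
  by [].
have nocyc : forall q, spath F s q -> forall c, c != [::] -> spath F (last s q) c ->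
    last (last s q) c = last s q -> False.
  elim/last_ind => [|q y IH] hq c cn hc hlc.
    case/lastP: c cn hc hlc => [//|c1 z] _ hc hlc; rewrite last_rcons in hlc; subst z.
    move: hc; rewrite /spath rcons_path => /andP[_ e].
    by move: (src (last s c1)); rewrite /= e.
  move: hq; rewrite /spath rcons_path => /andP[hq1 ez].
  rewrite last_rcons in hc hlc.
  case/lastP: c cn hc hlc => [//|c1 y'] _ hc hlc; rewrite last_rcons in hlc; subst y'.
  move: (hc); rewrite /spath rcons_path => /andP[hc1 e2].
  have hzz := indeg _ _ _ e2 ez.
  apply: (IH hq1 (y :: c1)) => //=.
  by rewrite ez; exact: hc1.
pose VS' := [set y | connect (fun a b => (a, b) \in F) s y].
have inVS : forall y, reachable F s y -> y \in VS'.
  by move=> y h; rewrite inE; apply/reachE.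
exists VS', F; split=> //.
- split.
  + move=> [a c] e /=; apply/and3P; split.
    * by have /and3P[] := sg _ (subsetP Fsub _ e).
    * exact/inVS/(tails _ _ e).
    * exact/inVS/(reach_ext (tails _ _ e) e).
  + exact/inVS/reach_refl.
  + by apply/subsetP => t tt; apply/inVS/Freach.
  + exact: Freach.
  + apply: le_trans hcost; rewrite /cost [X in _ <= X](big_setID F) /= (setIidPr Fsub) lerDl.
    apply: sumr_ge0 => [[a c]]; rewrite in_setD => /andP[_ e]; exact: nn.
- move=> x p hp hl; case: p hp hl => [//|y p] hp hl; exfalso.
  move: (hp) => /= /andP[e _].
  have [q [hq hlq]] := tails _ _ e.
  by apply: (nocyc q hq (y :: p)); rewrite // hlq.
- split; first exact/inVS/reach_refl.
  split; first exact: src.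
  move=> u; rewrite inE => /reachE [p [hp hl]] hsrc.
  case/lastP: p hp hl => [|q z] hp hl; first by [].
  rewrite last_rcons in hl; subst z.
  move: hp; rewrite /spath rcons_path => /andP[_ e].
  by move: (hsrc (last s q)); rewrite e.
Qed.
End Red.

Theorem lemma2 (R : realType) (V : finType) (E : rel V) (w : V -> V -> R)
    (s : V) (tau : {set V}) (b : R) :
  (forall u v, E u v -> 0 <= w u v) ->
  s \notin tau -> (2 <= #|tau|)%N -> 0 <= b ->
  (exists VS ES, feasible E w s tau b VS ES) ->
  exists VS ES, is_maximizer E w s tau b VS ES /\
    acyclic ES /\ unique_source VS ES s.
Proof.
move=> hw stau t2 b0 [VS0 [ES0 f0]].
have nnF : forall VS ES, feasible E w s tau b VS ES -> nonneg w ES.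
  by move=> VS ES [sg _ _ _ _] a c e; apply: hw; have /and3P[] := sg _ e.
have [VS1 [ES1 [f1 _ ac1 _]]] := reduce hw f0.
have [c1 hc1] := cd_exists_dag w ac1 t2 (let: And5 _ _ _ r _ := f1 in r).
pose Q := fun (ES : {set V * V}) (r : R) =>
  (exists VS, feasible E w s tau b VS ES) /\ is_CD w ES s tau (- r).
have Qf : forall x r1 r2, Q x r1 -> Q x r2 -> r1 = r2.
  by move=> x r1 r2 [_ h1] [_ h2]; apply: oppr_inj; apply: cd_fun h1 h2.
have ex : exists x r, x \in enum [set: {set V * V}] /\ Q x r.
  exists ES1, (- c1); rewrite mem_enum inE; split=> //; split; first by exists VS1.
  by rewrite opprK.
have [ES [r [_ [[VS fs] hcs] mn]]] := list_min Qf ex.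
have [VS2 [ES2 [f2 sub ac2 us2]]] := reduce hw fs.
have [c2 hc2] := cd_exists_dag w ac2 t2 (let: And5 _ _ _ r _ := f2 in r).
have le := cd_mono t2 sub (nnF _ _ fs) hcs hc2.
exists VS2, ES2; split; last by split.
split=> //; exists c2; split=> // VS' ES' c' f' h'.
apply: le_trans le.
have := mn ES' (- c'); rewrite mem_enum inE => /(_ isT).
move=> /(_ (conj (ex_intro _ VS' f') _)); rewrite opprK => /(_ h').
by rewrite lerNr.
Qed.
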